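(* (a) Let $\lambda=(n^m)$ be a rectangle and $1\le c\le n-1$. Then the total number of pairs $(T,u)$ with $T$ a standard Young tableau of shape $[\lambda]$ and $(T,u)$ a horizontal adjacency in column $c$ equals $f_\lambda$. (b) Let $\lambda$ be a strict partition with $\lambda_i=\lambda_1-i+1$ for all $1\le i\le\ell(\lambda)$ (a shifted rectangle) and $1\le c\le\lambda_1-1$. Then the total number of pairs $(T,u)$ with $T$ a shifted standard Young tableau of shape $[\lambda]^{\mathrm{sh}}$ and $(T,u)$ a horizontal adjacency in column $c$ equals $g^\lambda$.
   Context: Matrix coordinates. $[\lambda]=\{(i,j):i\in[\ell],j\in[\lambda_i]\}$; for strict $\lambda$, $[\lambda]^{\mathrm{sh}}=\{(i,j+i-1):i\in[\ell],j\in[\lambda_i]\}$. (Shifted) standard Young tableaux are bijections from the cell set to $[|\lambda|]$ increasing along rows and columns; $f_\lambda$ counts standard Young tableaux of shape $[\lambda]$ and $g^\lambda$ counts shifted ones of shape $[\lambda]^{\mathrm{sh}}$. For $u=(i,j)$ in the cell set $D$, $(T,u)$ is a horizontal adjacency if $(i,j+1)\in D$ and $T(i,j+1)=T(u)+1$; it lies in column $j$. *)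

(* Defs.v *)
From mathcomp Require Import all_boot.
Set Implicit Arguments. Unset Strict Implicit. Unset Printing Implicit Defensive.

(* A cell set is a duplicate-free list of matrix coordinates (i,j), 1-indexed. *)
Definition cell := (nat * nat)%type.

Definition young_cells (la : seq nat) : seq cell :=
  flatten [seq [seq (i.+1, j.+1) | j <- iota 0 (nth 0 la i)] | i <- iota 0 (size la)].

Definition shifted_cells (la : seq nat) : seq cell :=
  flatten [seq [seq (i.+1, j.+1 + i) | j <- iota 0 (nth 0 la i)] | i <- iota 0 (size la)].

(* A filling T of a cell list D is a list of values, T`_k being the entry
   in cell D`_k. *)
Definition entry (D : seq cell) (T : seq nat) (u : cell) : nat :=
  nth 0 T (index u D).

Definition is_standard (D : seq cell) (T : seq nat) : bool :=
  perm_eq T (iota 1 (size D)) &&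
  all (fun u =>
         (((u.1, u.2.+1) \in D) ==> (entry D T u < entry D T (u.1, u.2.+1))) &&
         (((u.1.+1, u.2) \in D) ==> (entry D T u < entry D T (u.1.+1, u.2))))
      D.

Definition SYT (D : seq cell) : seq (seq nat) :=
  [seq T <- permutations (iota 1 (size D)) | is_standard D T].

Definition num_SYT (D : seq cell) : nat := size (SYT D).

Definition f_shape (la : seq nat) : nat := num_SYT (young_cells la).
Definition g_shape (la : seq nat) : nat := num_SYT (shifted_cells la).

Definition horiz_adj (D : seq cell) (T : seq nat) (u : cell) : bool :=
  ((u.1, u.2.+1) \in D) && (entry D T (u.1, u.2.+1) == (entry D T u).+1).

Definition adj_count (D : seq cell) (c : nat) : nat :=
  \sum_(T <- SYT D) count (fun u => (u.2 == c) && horiz_adj D T u) D.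

Definition strict_partition (la : seq nat) : bool :=
  all (fun x => 0 < x) la && sorted (fun a b => b < a) la.

(* Main.v *)
Require Import Defs.
From mathcomp Require Import all_boot zify.
Set Implicit Arguments. Unset Strict Implicit. Unset Printing Implicit Defensive.

Lemma cnt_sum (X : Type) (p : pred X) s : count p s = \sum_(x <- s) (p x : nat).
Proof. elim: s => [|x s IH]; by rewrite ?big_nil ?big_cons //= IH. Qed.

Lemma sum_const_seq (X : Type) (s : seq X) k : \sum_(x <- s) k = size s * k.
Proof. elim: s => [|x s IH]; by rewrite ?big_nil ?big_cons //= IH mulSn. Qed.

Lemma SYT_mem D T : (T \in SYT D) = is_standard D T.
Proof.
rewrite mem_filter mem_permutations /is_standard.
by case: (perm_eq T _); rewrite ?andbF ?andbT.
Qed.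

Lemma std_perm D T : is_standard D T -> perm_eq T (iota 1 (size D)).
Proof. by case/andP. Qed.

Lemma std_size D T : is_standard D T -> size T = size D.
Proof. by move/std_perm/perm_size; rewrite size_iota. Qed.

Lemma std_uniq D T : is_standard D T -> uniq T.
Proof. by move/std_perm/perm_uniq => ->; apply: iota_uniq. Qed.

Lemma std_memT D T x : is_standard D T -> (x \in T) = (0 < x <= size D).
Proof. by move/std_perm/perm_mem => ->; rewrite mem_iota add1n ltnS. Qed.

Lemma std_lt D T w : is_standard D T -> w \in D ->
  ((w.1, w.2.+1) \in D -> entry D T w < entry D T (w.1, w.2.+1)) /\
  ((w.1.+1, w.2) \in D -> entry D T w < entry D T (w.1.+1, w.2)).
Proof.
case/andP=> _ /allP H /H /andP[/implyP H1 /implyP H2]; by split.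
Qed.

Lemma map_entry D T : uniq D -> size T = size D -> map (entry D T) D = T.
Proof.
move=> uD sT; apply: (@eq_from_nth _ 0); first by rewrite size_map sT.
move=> i; rewrite size_map => Hi.
by rewrite (nth_map (0,0)) // /entry index_uniq.
Qed.

Lemma entry_mem D T w : is_standard D T -> w \in D -> entry D T w \in T.
Proof.
move=> sT wD; rewrite /entry mem_nth // (std_size sT) index_mem //.
Qed.

Lemma entry_range D T w : is_standard D T -> w \in D -> 0 < entry D T w <= size D.
Proof. by move=> sT wD; rewrite -(std_memT _ sT) entry_mem. Qed.

Lemma entry_inj D T w1 w2 : uniq D -> is_standard D T -> w1 \in D -> w2 \in D ->
  entry D T w1 = entry D T w2 -> w1 = w2.
Proof.
move=> uD sT H1 H2 /eqP; rewrite /entry nth_uniq ?(std_size sT) ?index_mem ?(std_uniq sT) //.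
by move/eqP/(index_inj (0,0) H1 H2).
Qed.

Lemma sum_entry D T (F : nat -> nat) : uniq D -> is_standard D T ->
  \sum_(v <- D) F (entry D T v) = \sum_(x <- T) F x.
Proof.
move=> uD sT; by rewrite -{2}(map_entry uD (std_size sT)) big_map.
Qed.

Lemma sum_eqT D T k : uniq D -> is_standard D T ->
  \sum_(v <- D) (entry D T v == k : nat) = (k \in T).
Proof.
move=> uD sT; rewrite (sum_entry (fun x => (x == k : nat))) //.
by rewrite -cnt_sum count_uniq_mem // (std_uniq sT).
Qed.

Lemma sum_eq_cell (D : seq cell) r (X : cell -> bool) : uniq D ->
  \sum_(v <- D) ((v == r) && X v : nat) = ((r \in D) && X r).
Proof.
move=> uD. rewrite (eq_bigr (fun v => (v == r : nat) * X r)); last first.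
  by move=> v _; case: eqP => [->|]; rewrite ?mul0n ?mul1n.
rewrite -big_distrl /= -cnt_sum count_uniq_mem //. by case: (r \in D); case: (X r).
Qed.
Definition tau (p q i : nat) := if i == p then q else if i == q then p else i.
Definition tswap p q (T : seq nat) := [seq nth 0 T (tau p q i) | i <- iota 0 (size T)].

Lemma size_tswap p q T : size (tswap p q T) = size T.
Proof. by rewrite size_map size_iota. Qed.

Lemma nth_tswap p q T i : i < size T -> nth 0 (tswap p q T) i = nth 0 T (tau p q i).
Proof. by move=> Hi; rewrite (nth_map 0) ?size_iota // nth_iota. Qed.

Lemma tauK p q : involutive (tau p q).
Proof.
move=> i; rewrite /tau; case: (eqVneq i p) => [->|Hp]; first by rewrite eqxx; case: eqP.
case: (eqVneq i q) => [->|Hq]; first by rewrite eqxx.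
by rewrite (negbTE Hp) (negbTE Hq).
Qed.

Lemma tau_lt p q n i : p < n -> q < n -> (tau p q i < n) = (i < n).
Proof.
move=> Hp Hq; rewrite /tau; case: (eqVneq i p) => [->|_]; first by rewrite Hp Hq.
case: (eqVneq i q) => [->|_] //; by rewrite Hp Hq.
Qed.

Lemma tswapK p q T : p < size T -> q < size T -> tswap p q (tswap p q T) = T.
Proof.
move=> Hp Hq; apply: (@eq_from_nth _ 0); first by rewrite !size_tswap.
move=> i; rewrite !size_tswap => Hi.
by rewrite nth_tswap ?size_tswap // nth_tswap ?tau_lt // tauK.
Qed.

Lemma perm_tswap p q T : p < size T -> q < size T -> perm_eq (tswap p q T) T.
Proof.
move=> Hp Hq; rewrite -{2}(mkseq_nth 0 T) /mkseq /tswap.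
rewrite (@eq_map _ _ _ (nth 0 T \o tau p q)) // map_comp; apply: perm_map.
apply: uniq_perm; first by rewrite map_inj_uniq ?iota_uniq //; apply: can_inj (tauK p q).
  exact: iota_uniq.
move=> x; rewrite -{1}(tauK p q x) mem_map; last exact: can_inj (tauK p q).
by rewrite !mem_iota !add0n tau_lt.
Qed.
Definition nb (u v : cell) := (v == (u.1, u.2.+1)) || (v == (u.1.+1, u.2)).
Definition Qp D T u v := (entry D T v == (entry D T u).+1) && ~~ nb u v && ~~ nb v u.
Definition gsw (D : seq cell) u v T := tswap (index u D) (index v D) T.

Lemma idx_eq (D : seq cell) w u : w \in D -> u \in D -> (index w D == index u D) = (w == u).
Proof.
move=> wD uD; apply/eqP/eqP => [h|->] //; exact: (@index_inj _ (0,0) D w u wD uD h).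
Qed.

Lemma entry_gsw D T u v w : uniq D -> size T = size D -> u \in D -> v \in D -> w \in D ->
  entry D (gsw D u v T) w = entry D T (if w == u then v else if w == v then u else w).
Proof.
move=> uD sT uDm vDm wD; rewrite /entry /gsw nth_tswap; last by rewrite sT index_mem.
rewrite /tau (idx_eq wD uDm) (idx_eq wD vDm).
by case: (w == u); case: (w == v).
Qed.

Definition sg x t := if t == x then x.+1 else if t == x.+1 then x else t.

Lemma sg_lt x a b : a < b -> ~~((a == x) && (b == x.+1)) -> sg x a < sg x b.
Proof. rewrite /sg; case: (eqVneq a x); case: (eqVneq a x.+1); case: (eqVneq b x); case: (eqVneq b x.+1); lia. Qed.

Lemma swap_ok D T u v : uniq D -> is_standard D T -> u \in D -> v \in D -> Qp D T u v ->
  is_standard D (gsw D u v T) && Qp D (gsw D u v T) v u.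
Proof.
move=> uD sT uDm vDm /andP[/andP[/eqP ev nuv] nvu].
set x := entry D T u in ev.
have sz := std_size sT.
have E : forall w, w \in D -> entry D (gsw D u v T) w = sg x (entry D T w).
  move=> w wD; rewrite entry_gsw //.
  case: (eqVneq w u) => [->|wu]; first by rewrite ev /sg eqxx.
  case: (eqVneq w v) => [->|wv].
    rewrite ev /sg; case: eqP => [/esym/n_Sn //|_]; by rewrite eqxx.
  rewrite /sg; case: eqP => [h|_]; first by case/eqP: wu; exact: entry_inj h.
  case: eqP => [h|_] //; case/eqP: wv; apply: (entry_inj uD sT) => //; by rewrite h ev.
apply/andP; split.
  apply/andP; split.
    apply: perm_trans (std_perm sT); apply: perm_tswap; by rewrite sz index_mem.
  apply/allP => w wD; have [L1 L2] := std_lt sT wD.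
  apply/andP; split; apply/implyP => nD; rewrite !E //; apply: sg_lt.
  - exact: L1.
  - apply/negP => /andP[/eqP h1 /eqP h2].
    have wu : w = u by apply: (entry_inj uD sT).
    have wv : (w.1, w.2.+1) = v by apply: (entry_inj uD sT) => //; rewrite h2 ev.
    by move: nuv; rewrite /nb -wu wv eqxx.
  - exact: L2.
  - apply/negP => /andP[/eqP h1 /eqP h2].
    have wu : w = u by apply: (entry_inj uD sT).
    have wv : (w.1.+1, w.2) = v by apply: (entry_inj uD sT) => //; rewrite h2 ev.
    by move: nuv; rewrite /nb -wu wv eqxx orbT.
rewrite /Qp !E // ev /sg -/x eqxx (gtn_eqF (ltnSn x)) eqxx /=.
by rewrite eqxx nuv nvu.
Qed.

Lemma count_Q_le D u v : uniq D -> u \in D -> v \in D ->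
  count (fun T => Qp D T u v) (SYT D) <= count (fun T => Qp D T v u) (SYT D).
Proof.
move=> uD uDm vDm; rewrite -!size_filter.
rewrite -(size_map (gsw D u v)); apply: uniq_leq_size.
  rewrite map_inj_in_uniq; first by apply: filter_uniq; apply: filter_uniq; apply: permutations_uniq.
  move=> T1 T2; rewrite mem_filter => /andP[_]; rewrite SYT_mem => s1.
  rewrite mem_filter => /andP[_]; rewrite SYT_mem => s2 E.
  have : gsw D u v (gsw D u v T1) = gsw D u v (gsw D u v T2) by rewrite E.
  by rewrite /gsw !tswapK // ?(std_size s1) ?(std_size s2) ?index_mem.
move=> T' /mapP[T]; rewrite mem_filter => /andP[hQ]; rewrite SYT_mem => sT ->.
by rewrite mem_filter SYT_mem andbC swap_ok.
Qed.

Lemma count_Q D u v : uniq D -> u \in D -> v \in D ->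
  count (fun T => Qp D T u v) (SYT D) = count (fun T => Qp D T v u) (SYT D).
Proof. by move=> *; apply/eqP; rewrite eqn_leq !count_Q_le. Qed.
Definition vadj D T (u : cell) :=
  ((u.1.+1, u.2) \in D) && (entry D T (u.1.+1, u.2) == (entry D T u).+1).

Lemma decomp D T u v (C : bool) : is_standard D T -> u \in D -> v \in D ->
  (C && (entry D T v == (entry D T u).+1) : nat) =
  (C && Qp D T u v) + (C && (v == (u.1, u.2.+1)) && (entry D T v == (entry D T u).+1))
  + (C && (v == (u.1.+1, u.2)) && (entry D T v == (entry D T u).+1)).
Proof.
move=> sT uD vD.
have hvu : nb v u -> (entry D T v == (entry D T u).+1) = false.
  have [L1 L2] := std_lt sT vD.
  rewrite /nb => /orP[/eqP Eu | /eqP Eu]; [move: L1 | move: L2]; rewrite -Eu => /(_ uD) lt;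
  apply/eqP; lia.
rewrite /Qp; case: C => //=.
case P: (entry D T v == (entry D T u).+1); rewrite /= ?andbF //.
case: (boolP (nb v u)) => [/hvu|_]; first by rewrite P.
rewrite andbT /nb; case: (eqVneq v (u.1, u.2.+1)) => [->|_] /=.
  by rewrite xpair_eqE (ltn_eqF (ltnSn _)).
by case: (v == (u.1.+1, u.2)).
Qed.

Lemma inner_split D T u (C : cell -> bool) : uniq D -> is_standard D T -> u \in D ->
  \sum_(v <- D) (C v && (entry D T v == (entry D T u).+1) : nat) =
  \sum_(v <- D) (C v && Qp D T u v : nat) + (C (u.1, u.2.+1) && horiz_adj D T u : nat)
  + (C (u.1.+1, u.2) && vadj D T u : nat).
Proof.
move=> uD sT uDm.
rewrite (eq_big_seq (fun v => (C v && Qp D T u v : nat)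
   + ((v == (u.1, u.2.+1)) && (C (u.1, u.2.+1) && (entry D T (u.1, u.2.+1) == (entry D T u).+1)) : nat)
   + ((v == (u.1.+1, u.2)) && (C (u.1.+1, u.2) && (entry D T (u.1.+1, u.2) == (entry D T u).+1)) : nat))).
  rewrite !big_split /= !sum_eq_cell // /horiz_adj /vadj.
  by case: (C _); case: (C _); case: (_ \in D); case: (_ \in D); case: (_ == _); case: (_ == _).
move=> v vD; rewrite (decomp (C v) sT uDm vD).
case: (eqVneq v (u.1, u.2.+1)) => [->|_].
  by rewrite /= xpair_eqE (ltn_eqF (ltnSn _)) /= !andbF !andbT.
case: (eqVneq v (u.1.+1, u.2)) => [->|_]; by rewrite /= ?andbF ?andbT.
Qed.
Definition Hmax (D : seq cell) cN :=
  forall w, w \in D -> w != cN -> ((w.1, w.2.+1) \in D) || ((w.1.+1, w.2) \in D).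
Definition Hmin (D : seq cell) c1 :=
  forall w, w \in D -> w != c1 ->
    exists2 w', w' \in D & (w == (w'.1, w'.2.+1)) || (w == (w'.1.+1, w'.2)).

Lemma e_max D T cN : uniq D -> is_standard D T -> cN \in D -> Hmax D cN ->
  forall w, w \in D -> (entry D T w == size D) = (w == cN).
Proof.
move=> uD sT cD H.
have key : forall w, w \in D -> entry D T w = size D -> w = cN.
  move=> w wD ew; apply/eqP; apply/negPn/negP => ne.
  have [L1 L2] := std_lt sT wD.
  case/orP: (H w wD ne) => nD.
    have /andP[_ h] := entry_range sT nD; have l := L1 nD; rewrite ew in l.
    by rewrite ltnNge h in l.
  have /andP[_ h] := entry_range sT nD; have l := L2 nD; rewrite ew in l.
  by rewrite ltnNge h in l.
have : size D \in map (entry D T) D.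
  rewrite (map_entry uD (std_size sT)) (std_memT _ sT) leqnn andbT.
  by case: D cD {uD sT H key}.
case/mapP => w0 w0D /esym e0.
have e0' : w0 = cN := key w0 w0D e0.
move=> w wD; apply/eqP/eqP => [|->]; first exact: key w wD.
by rewrite -e0'.
Qed.

Lemma e_min D T c1 : uniq D -> is_standard D T -> c1 \in D -> Hmin D c1 ->
  forall w, w \in D -> (entry D T w == 1) = (w == c1).
Proof.
move=> uD sT cD H.
have key : forall w, w \in D -> entry D T w = 1 -> w = c1.
  move=> w wD ew; apply/eqP; apply/negPn/negP => ne.
  have [w' w'D /orP[/eqP E|/eqP E]] := H w wD ne; have [L1 L2] := std_lt sT w'D.
    rewrite E in wD ew; have l := L1 wD; have /andP[h _] := entry_range sT w'D.
    by rewrite ew ltnS leqNgt h in l.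
  rewrite E in wD ew; have l := L2 wD; have /andP[h _] := entry_range sT w'D.
  by rewrite ew ltnS leqNgt h in l.
have : 1 \in map (entry D T) D.
  rewrite (map_entry uD (std_size sT)) (std_memT _ sT) /=.
  by case: D cD {uD sT H key}.
case/mapP => w0 w0D /esym e0.
have e0' : w0 = c1 := key w0 w0D e0.
move=> w wD; apply/eqP/eqP => [|->]; first exact: key w wD.
by rewrite -e0'.
Qed.

Lemma out_total D T cN a : uniq D -> is_standard D T -> cN \in D -> Hmax D cN ->
  \sum_(u <- D) \sum_(v <- D) ((u.2 == a) && (entry D T v == (entry D T u).+1) : nat)
  + (cN.2 == a : nat) = count (fun u => u.2 == a) D.
Proof.
move=> uD sT cD H.
have -> : (cN.2 == a : nat) = \sum_(u <- D) ((u.2 == a) && (entry D T u == size D) : nat).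
  rewrite (eq_big_seq (fun u => ((u == cN) && (cN.2 == a) : nat))).
    by rewrite sum_eq_cell // cD.
  move=> u uD'; rewrite (e_max uD sT cD H uD').
  by case: (eqVneq u cN) => [->|_]; rewrite ?andbF ?andbT.
rewrite -big_split cnt_sum; apply: eq_big_seq => u uD' /=.
rewrite (eq_bigr (fun v => (u.2 == a : nat) * (entry D T v == (entry D T u).+1))); last first.
  by move=> v _; rewrite mulnb.
rewrite -big_distrr /= sum_eqT // (std_memT _ sT).
have := entry_range sT uD'; case: (u.2 == a) => /=; last by [].
move=> /andP[_ h]; rewrite mul1n; case: ltngtP h => //.
Qed.

Lemma in_total D T c1 a : uniq D -> is_standard D T -> c1 \in D -> Hmin D c1 ->
  \sum_(u <- D) \sum_(v <- D) ((v.2 == a) && (entry D T v == (entry D T u).+1) : nat)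
  + (c1.2 == a : nat) = count (fun u => u.2 == a) D.
Proof.
move=> uD sT cD H.
have -> : (c1.2 == a : nat) = \sum_(u <- D) ((u.2 == a) && (entry D T u == 1) : nat).
  rewrite (eq_big_seq (fun u => ((u == c1) && (c1.2 == a) : nat))).
    by rewrite sum_eq_cell // cD.
  move=> u uD'; rewrite (e_min uD sT cD H uD').
  by case: (eqVneq u c1) => [->|_]; rewrite ?andbF ?andbT.
rewrite exchange_big -big_split cnt_sum; apply: eq_big_seq => v vD /=.
rewrite (eq_bigr (fun u => (v.2 == a : nat) * (entry D T v == (entry D T u).+1))); last first.
  by move=> u _; rewrite mulnb.
rewrite -big_distrr /=.
have := entry_range sT vD; set k := entry D T v => hk; have /andP[hk1 hk2] := hk; clearbody k.
rewrite (sum_entry (fun x => (k == x.+1 : nat))) //.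
rewrite (eq_bigr (fun x => (x == k.-1 : nat))); last first.
  by move=> x _; congr nat_of_bool; apply/eqP/eqP; lia.
rewrite -cnt_sum count_uniq_mem ?(std_uniq sT) // (std_memT _ sT).
case: (v.2 == a) => /=; last by [].
rewrite mul1n; case: (eqVneq k 1) => [->|nk1] //=.
move/eqP: nk1 => nk1; have -> : (0 < k.-1 <= size D) = true by case: k hk1 hk2 nk1 {hk} => [|[|k']] //= _ h _; exact: ltnW.
by [].
Qed.
Lemma Qsym D a : uniq D ->
  \sum_(T <- SYT D) \sum_(u <- D) \sum_(v <- D) ((u.2 == a) && Qp D T u v : nat) =
  \sum_(T <- SYT D) \sum_(u <- D) \sum_(v <- D) ((v.2 == a) && Qp D T u v : nat).
Proof.
move=> uD.
have E1 : \sum_(T <- SYT D) \sum_(u <- D) \sum_(v <- D) ((u.2 == a) && Qp D T u v : nat) =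
  \sum_(u <- D) \sum_(v <- D) ((u.2 == a) * count (fun T => Qp D T u v) (SYT D)).
  rewrite exchange_big; apply: eq_bigr => u _; rewrite exchange_big; apply: eq_bigr => v _.
  by rewrite cnt_sum big_distrr /=; apply: eq_bigr => T _; rewrite mulnb.
have E2 : \sum_(T <- SYT D) \sum_(u <- D) \sum_(v <- D) ((v.2 == a) && Qp D T u v : nat) =
  \sum_(v <- D) \sum_(u <- D) ((v.2 == a) * count (fun T => Qp D T u v) (SYT D)).
  rewrite (eq_bigr (fun T => \sum_(v <- D) \sum_(u <- D) ((v.2 == a) && Qp D T u v : nat)));
    last by move=> T _; rewrite exchange_big.
  rewrite exchange_big; apply: eq_bigr => v _; rewrite exchange_big; apply: eq_bigr => u _.
  by rewrite cnt_sum big_distrr /=; apply: eq_bigr => T _; rewrite mulnb.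
rewrite E1 E2; apply: eq_big_seq => u uD'; apply: eq_big_seq => v vD'.
by rewrite count_Q.
Qed.

Lemma adj_step D c1 cN b : uniq D -> c1 \in D -> cN \in D -> Hmin D c1 -> Hmax D cN ->
  adj_count D b.+1 + num_SYT D * (cN.2 == b.+1) = adj_count D b + num_SYT D * (c1.2 == b.+1).
Proof.
move=> uD c1D cND Hm HM.
have per : forall T, T \in SYT D ->
  \sum_(u <- D) \sum_(v <- D) ((u.2 == b.+1) && Qp D T u v : nat)
   + count (fun u => (u.2 == b.+1) && horiz_adj D T u) D
   + count (fun u => (u.2 == b.+1) && vadj D T u) D + (cN.2 == b.+1)
  = \sum_(u <- D) \sum_(v <- D) ((v.2 == b.+1) && Qp D T u v : nat)
   + count (fun u => (u.2 == b) && horiz_adj D T u) D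
   + count (fun u => (u.2 == b.+1) && vadj D T u) D + (c1.2 == b.+1).
  move=> T; rewrite SYT_mem => sT.
  have Ho := out_total b.+1 uD sT cND HM.
  have Hi := in_total b.+1 uD sT c1D Hm.
  rewrite -Hi in Ho.
  have E1 : \sum_(u <- D) \sum_(v <- D) ((u.2 == b.+1) && (entry D T v == (entry D T u).+1) : nat)
   = \sum_(u <- D) (\sum_(v <- D) ((u.2 == b.+1) && Qp D T u v : nat)
     + ((u.2 == b.+1) && horiz_adj D T u : nat) + ((u.2 == b.+1) && vadj D T u : nat)).
    by apply: eq_big_seq => u uD'; rewrite (inner_split (fun _ => u.2 == b.+1)).
  have E2 : \sum_(u <- D) \sum_(v <- D) ((v.2 == b.+1) && (entry D T v == (entry D T u).+1) : nat)
   = \sum_(u <- D) (\sum_(v <- D) ((v.2 == b.+1) && Qp D T u v : nat)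
     + ((u.2 == b) && horiz_adj D T u : nat) + ((u.2 == b.+1) && vadj D T u : nat)).
    apply: eq_big_seq => u uD'.
    by rewrite (inner_split (fun v => v.2 == b.+1) uD sT uD') /= eqSS.
  rewrite E1 E2 !big_split /= -!cnt_sum in Ho; exact: Ho.
have := @eq_big_seq nat 0 addn _ (SYT D) _ _ per.
rewrite !big_split /= Qsym // !sum_const_seq.
rewrite /adj_count /num_SYT => H.
set Q := \sum_(T <- SYT D) \sum_(u <- D) \sum_(v <- D) _ in H.
set A1 := \sum_(T <- SYT D) count (fun u => (u.2 == b.+1) && horiz_adj D T u) D in H *.
set A0 := \sum_(T <- SYT D) count (fun u => (u.2 == b) && horiz_adj D T u) D in H *.
set V := \sum_(T <- SYT D) count (fun u => (u.2 == b.+1) && vadj D T u) D in H.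
lia.
Qed.

Lemma adj_zero D : (forall u, u \in D -> 0 < u.2) -> adj_count D 0 = 0.
Proof.
move=> H; rewrite /adj_count big1_seq // => T _.
apply/eqP; rewrite -leqn0 leqNgt -has_count; apply/hasP => -[u /H]; case: (u.2) => //.
Qed.

Lemma col_const D c1 cN : uniq D -> c1 \in D -> cN \in D -> Hmin D c1 -> Hmax D cN ->
  c1.2 = 1 -> (forall u, u \in D -> 0 < u.2) ->
  forall c, 0 < c < cN.2 -> adj_count D c = num_SYT D.
Proof.
move=> uD c1D cND Hm HM e1 pos; elim=> [//|c IH] /andP[_ hc].
have := adj_step c uD c1D cND Hm HM; rewrite e1.
have -> : (cN.2 == c.+1) = false by apply/negbTE; rewrite neq_ltn hc orbT.
case: c IH hc => [|c] IH hc.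
  by rewrite (adj_zero pos) /= muln1 muln0 addn0.
by rewrite IH ?(ltn_trans (ltnSn _) hc) //= !muln0 !addn0.
Qed.
Lemma yc_eq la : young_cells la =
  [seq (i.+1, j.+1) | i <- iota 0 (size la), j <- iota 0 (nth 0 la i)].
Proof. by []. Qed.

Lemma sc_eq la : shifted_cells la =
  [seq (i.+1, j.+1 + i) | i <- iota 0 (size la), j <- iota 0 (nth 0 la i)].
Proof. by []. Qed.

Lemma mem_rect m n (x : cell) :
  (x \in young_cells (nseq m n)) = (0 < x.1 <= m) && (0 < x.2 <= n).
Proof.
rewrite yc_eq size_nseq; apply/allpairsPdep/andP.
  move=> [i [j [iI jJ ->]]]; move: iI jJ; rewrite !mem_iota /= nth_nseq => hi.
  by rewrite hi /= !add0n; split.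
case: x => [a b] /= [/andP[a0 am] /andP[b0 bn]].
exists a.-1, b.-1; rewrite !mem_iota !add0n nth_nseq prednK // prednK //.
by rewrite (leq_trans _ am) ?leqSpred // am bn.
Qed.

Lemma uniq_rect la : uniq (young_cells la).
Proof.
rewrite yc_eq; apply: allpairs_uniq_dep; first exact: iota_uniq.
  by move=> i _; apply: iota_uniq.
by move=> [i1 j1] [i2 j2] _ _ /= [-> ->].
Qed.

Lemma uniq_shift la : uniq (shifted_cells la).
Proof.
rewrite sc_eq; apply: allpairs_uniq_dep; first exact: iota_uniq.
  by move=> i _; apply: iota_uniq.
move=> [i1 j1] [i2 j2] _ _ /= [e1]; rewrite e1 => /eqP; rewrite eqn_add2r => /eqP -> //.
Qed.

Lemma partA m n c : 0 < m -> 1 <= c <= n - 1 ->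
  adj_count (young_cells (nseq m n)) c = f_shape (nseq m n).
Proof.
move=> m0 /andP[c1 cn].
have n2 : 1 < n by lia.
apply: (@col_const _ (1,1) (m,n)).
- exact: uniq_rect.
- by rewrite mem_rect /= m0; lia.
- by rewrite mem_rect /= leqnn m0; lia.
- move=> [i j]; rewrite mem_rect /= => /andP[/andP[i0 im] /andP[j0 jn]] ne.
  case: (ltnP 1 j) => hj.
    exists (i, j.-1); first by rewrite mem_rect /= i0 im /=; lia.
    by rewrite /= prednK ?eqxx //; lia.
  have j1 : j = 1 by lia.
  have hi : 1 < i by move: ne; rewrite j1 xpair_eqE eqxx andbT; lia.
  exists (i.-1, j); first by rewrite mem_rect /= j0 jn andbT; lia.
  by rewrite /= prednK ?eqxx ?orbT //; lia.
- move=> [i j]; rewrite mem_rect /= => /andP[/andP[i0 im] /andP[j0 jn]] ne.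
  case: (ltnP j n) => hj; first by rewrite !mem_rect /= i0 im hj.
  have jn' : j = n by lia.
  have hi : i < m by move: ne; rewrite jn' xpair_eqE eqxx andbT; lia.
  apply/orP; right; rewrite mem_rect /=; repeat (apply/andP; split); lia.
- by [].
- by move=> [i j]; rewrite mem_rect /= => /andP[_ /andP[]].
- by rewrite /=; lia.
Qed.
Lemma mem_shift la (x : cell) : strict_partition la ->
  (forall i, i < size la -> nth 0 la i = nth 0 la 0 - i) ->
  (x \in shifted_cells la) = (0 < x.1 <= size la) && (x.1 <= x.2 <= nth 0 la 0).
Proof.
move=> /andP[/allP pos _] H.
have pos' : forall i, i < size la -> i < nth 0 la 0.
  move=> i hi; have := pos _ (mem_nth 0 hi); rewrite (H i hi); lia.
rewrite sc_eq; apply/allpairsPdep/andP.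
  move=> [i [j [iI jJ ->]]]; move: iI jJ; rewrite !mem_iota /= !add0n => hi.
  rewrite H // => hj; have := pos' _ hi; split; lia.
case: x => [a b] /= [/andP[a0 al] /andP[ab bk]].
exists a.-1, (b - a); rewrite !mem_iota !add0n H; last by lia.
split; [lia | lia | ].
congr pair; lia.
Qed.

Lemma partB la c : strict_partition la ->
  (forall i, i < size la -> nth 0 la i = nth 0 la 0 - i) ->
  1 <= c <= nth 0 la 0 - 1 -> adj_count (shifted_cells la) c = g_shape la.
Proof.
move=> sp H /andP[c1 ck].
set k := nth 0 la 0 in ck H.
set l := size la in H.
have k2 : 1 < k by lia.
have l1 : 0 < l by rewrite /l; move: k2; rewrite /k; case: (la).
have lk : l <= k.
  case/andP: sp => /allP pos _.
  have hl : l.-1 < size la by rewrite /l; lia.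
  have := pos _ (mem_nth 0 hl); rewrite (H _ hl); lia.
have M := fun x => mem_shift x sp H.
apply: (@col_const _ (1,1) (l,k)).
- exact: uniq_shift.
- by rewrite M /=; lia.
- by rewrite M /= leqnn lk andbT; lia.
- move=> [i j]; rewrite M /= => /andP[/andP[i0 il] /andP[ij jk]] ne.
  case: (ltnP i j) => hj.
    exists (i, j.-1); first by rewrite M /=; repeat (apply/andP; split); lia.
    by rewrite /= prednK ?eqxx //; lia.
  have ji : j = i by lia.
  have hi : 1 < i by move: ne; rewrite ji xpair_eqE; case: eqP => //; lia.
  exists (i.-1, j); first by rewrite M /=; repeat (apply/andP; split); lia.
  by rewrite /= prednK ?eqxx ?orbT //; lia.
- move=> [i j]; rewrite M /= => /andP[/andP[i0 il] /andP[ij jk]] ne.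
  case: (ltnP j k) => hj.
    by apply/orP; left; rewrite M /=; repeat (apply/andP; split); lia.
  have jn' : j = k by lia.
  have hi : i < l by move: ne; rewrite jn' xpair_eqE eqxx andbT; lia.
  apply/orP; right; rewrite M /=; repeat (apply/andP; split); lia.
- by [].
- move=> [i j]; rewrite M /=; lia.
- by rewrite /=; lia.
Qed.

Theorem mainTheorem15 :
  (forall m n c : nat, 0 < m -> 1 <= c <= n - 1 ->
     adj_count (young_cells (nseq m n)) c = f_shape (nseq m n)) /\
  (forall (la : seq nat) (c : nat),
     strict_partition la ->
     (forall i, i < size la -> nth 0 la i = nth 0 la 0 - i) ->
     1 <= c <= nth 0 la 0 - 1 ->
     adj_count (shifted_cells la) c = g_shape la).
Proof. split; [exact: partA | exact: partB]. Qed.
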